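(* Suppose that $\varphi,\psi\in\boldsymbol{\mathcal X}_N$ satisfy $\mathrm{dist}_\infty(\operatorname{supp} \varphi, \operatorname{supp} \psi) > l-1$. Then \begin{equation} \langle \mathscr{T} \varphi, \psi \rangle = 0, \quad \langle \mathscr{T}' \varphi, \psi \rangle = 0, \quad \langle \mathscr{R} \varphi, \psi \rangle = 0, \quad \langle \mathscr{R}' \varphi, \psi \rangle = 0. \end{equation}
   Context: Let $L\ge 3$ be an odd integer, $N\ge 1$ an integer, $d\ge 2$, $m\ge1$, and let $\mathbb T_N=(\mathbb Z/L^N\mathbb Z)^d$ be the discrete torus, with the distance $\rho_\infty(x,y)=\inf\{|x-y+z|_\infty : z\in (L^N\mathbb Z)^d\}$ and, for sets $M_1,M_2\subset\mathbb T_N$, $\mathrm{dist}_\infty(M_1,M_2)=\min\{\rho_\infty(x,y): x\in M_1, y\in M_2\}$. Let $\boldsymbol{\mathcal X}_N$ be the space of functions $\varphi:\mathbb T_N\to\mathbb R^m$ with $\sum_{x\in\mathbb T_N}\varphi(x)=0$, with scalar product $\langle\varphi,\psi\rangle=\sum_{x\in\mathbb T_N}\langle\varphi(x),\psi(x)\rangle_{\mathbb R^m}$. Let $(\nabla\varphi)^r_j(x)=\varphi^r(x+e_j)-\varphi^r(x)$ and $(\nabla^*\varphi)^r_j(x)=\varphi^r(x-e_j)-\varphi^r(x)$. Let $A:\mathbb R^{m\times d}\to\mathbb R^{m\times d}$ be linear, symmetric and positive definite, define $(\varphi,\psi)_+=\sum_{x\in\mathbb T_N}\langle A\nabla\varphi(x),\nabla\psi(x)\rangle_{\mathbb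 R^{m\times d}}$ (a scalar product on $\boldsymbol{\mathcal X}_N$; the resulting Hilbert space is $\boldsymbol{\mathcal H}_+$) and $\mathscr A=\nabla^*A\nabla$, so that $\langle\mathscr A\varphi,\psi\rangle=(\varphi,\psi)_+$. Let $l\ge 3$ be an integer with $l-1<L^N$, $Q=\{1,\ldots,l-1\}^d\subset\mathbb T_N$, and for $x\in\mathbb T_N$ let $\boldsymbol{\mathcal H}_+(Q+x)=\{\varphi\in\boldsymbol{\mathcal X}_N:\varphi=0 \text{ on } \mathbb T_N\setminus(Q+x)\}$. Let $\varPi_x$ be the $(\cdot,\cdot)_+$-orthogonal projection of $\boldsymbol{\mathcal H}_+$ onto $\boldsymbol{\mathcal H}_+(Q+x)$. Define $\mathscr T=l^{-d}\sum_{x\in\mathbb T_N}\varPi_x$, its dual $\mathscr T'$ with respect to $\langle\cdot,\cdot\rangle$ (i.e. $\langle\mathscr T'\varphi,\psi\rangle=\langle\varphi,\mathscr T\psi\rangle$; equivalently $\mathscr T'=\mathscr A\mathscr T\mathscr A^{-1}$), $\mathscr R=\mathrm{id}-\mathscr T$ and $\mathscr R'=\mathrm{id}-\mathscr T'$. *)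

(* Defs.v *)
From HB Require Import structures.
From mathcomp Require Import all_boot all_order all_algebra.
From mathcomp Require Import reals.
Set Implicit Arguments. Unset Strict Implicit. Unset Printing Implicit Defensive.
Import Order.TTheory GRing.Theory Num.Theory.
Local Open Scope ring_scope.

(* Discrete torus (Z / n Z)^d, n = L^N, as row vectors over 'I_n = Z/nZ
   (written 'I_n.-1.+1, which is 'I_n for n >= 1, to get the Zp group law). *)
Definition tor (n d : nat) := 'rV['I_n.-1.+1]_d.

Definition ej (n d : nat) (j : 'I_d) : tor n d :=
  \row_(i < d) (if i == j then inord 1 else 0).

(* circular distance on Z/nZ: min over integer shifts of |a - b + k n| *)
Definition cdist (k : nat) (a b : 'I_k.+1) : nat :=
  minn (nat_of_ord (a - b)%R) (nat_of_ord (b - a)%R).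

(* rho_infty(x,y) = inf_{z in (nZ)^d} |x - y + z|_infty *)
Definition rho (n d : nat) (x y : tor n d) : nat :=
  (\max_(i < d) cdist (x ord0 i) (y ord0 i))%N.

Section Fields.
Variable R : realType.
Variables n d m : nat.

Definition field := tor n d -> 'rV[R]_m.

Definition inX (phi : field) : Prop := \sum_(x : tor n d) phi x = 0.

Definition grad (phi : field) (x : tor n d) : 'M[R]_(m, d) :=
  \matrix_(r < m, j < d) (phi (x + ej n j) 0 r - phi x 0 r).

Definition frob (F G : 'M[R]_(m, d)) : R := \sum_(r < m) \sum_(j < d) F r j * G r j.

Definition ip (phi psi : field) : R :=
  \sum_(x : tor n d) \sum_(r < m) phi x 0 r * psi x 0 r.

Definition ipA (A : 'M[R]_(m, d) -> 'M[R]_(m, d)) (phi psi : field) : R :=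
  \sum_(x : tor n d) frob (A (grad phi x)) (grad psi x).

Definition inQ (l : nat) (x y : tor n d) : bool :=
  [forall i : 'I_d, (1 <= nat_of_ord ((y - x)%R ord0 i) <= l - 1)%N].

Definition inHQ (l : nat) (x : tor n d) (chi : field) : Prop :=
  inX chi /\ forall y, ~~ inQ l x y -> chi y = 0.

Definition is_orth_proj (A : 'M[R]_(m, d) -> 'M[R]_(m, d)) (S : field -> Prop)
  (phi P : field) : Prop :=
  S P /\ forall chi, S chi -> ipA A (fun y => phi y - P y) chi = 0.

Definition Top (l : nat) (Pi : tor n d -> field -> field) (phi : field) : field :=
  fun y => (l%:R ^- d) *: \sum_(x : tor n d) Pi x phi y.

End Fields.

(* Main.v *)
Require Import Defs.
From HB Require Import structures.
From mathcomp Require Import all_boot all_order all_algebra.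
From mathcomp Require Import reals zify lra.
Import Order.TTheory GRing.Theory Num.Theory.
Local Open Scope ring_scope.

Lemma inZpD k a b : inZp (a + b) = inZp a + inZp b :> 'I_k.+1.
Proof. by apply: val_inj => /=; rewrite modnDm. Qed.

Lemma inZpB k a b : (b <= a)%N -> inZp (a - b) = inZp a - inZp b :> 'I_k.+1.
Proof.
move=> ba; apply/eqP; rewrite eq_sym subr_eq -inZpD subnK //.
Qed.

Lemma val_subZ (k : nat) (a b : 'I_k.+1) : (b <= a)%N -> nat_of_ord (a - b) = (a - b)%N.
Proof.
move=> ba.
rewrite -[a in a - b]valZpK -[b in _ - b]valZpK -inZpB //= modn_small //.
exact: leq_ltn_trans (leq_subr _ _) (ltn_ord a).
Qed.

Lemma cd_small k l (c q u v : 'I_k.+1) : (1 <= c <= l-1)%N -> (1 <= q <= l - 1)%N ->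
  (u <= 1)%N -> (v <= 1)%N -> (cdist (c - v + u)%R q <= l - 1)%N.
Proof.
move=> hc hq hu hv.
set p := c - v + u.
have hp : (p <= l)%N.
  rewrite /p -[c]valZpK -[v]valZpK -[u]valZpK.
  rewrite -inZpB; last by move: hc hv; clear; lia.
  rewrite -inZpD /=.
apply: leq_trans (leq_mod _ _) _. move: hc hu hv. move: (nat_of_ord c) (nat_of_ord u) (nat_of_ord v). clear. move=> c u v. lia.
clearbody p.
rewrite /cdist. case: (leqP q p) => h.
  apply: leq_trans (geq_minl _ _) _. rewrite (@val_subZ _ _ _ h). move: hq hp h.
  move: (nat_of_ord q) (nat_of_ord p). clear. move=> q p. lia.
apply: leq_trans (geq_minr _ _) _. rewrite (@val_subZ _ _ _ (ltnW h)). move: hq hp h.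
  move: (nat_of_ord q) (nat_of_ord p). clear. move=> q p. lia.
Qed.
Lemma cdist_shift k (a b c : 'I_k.+1) : cdist a b = cdist (a - c) (b - c).
Proof.
rewrite /cdist.
have E (x y : 'I_k.+1) : x - c - (y - c) = x - y by rewrite opprB addrA subrK.
by rewrite !E.
Qed.

Lemma cdist_sym k (a b : 'I_k.+1) : cdist a b = cdist b a.
Proof. by rewrite /cdist minnC. Qed.

Lemma rho_refl n d (a : tor n d) : rho a a = 0%N.
Proof.
rewrite /rho; apply/eqP; rewrite -leqn0; apply/bigmax_leqP => i _.
by rewrite /cdist subrr.
Qed.

Lemma rho_sym n d (a b : tor n d) : rho a b = rho b a.
Proof. by rewrite /rho; apply: eq_bigr => i _; rewrite cdist_sym. Qed.

Lemma rho_near n d l (x a b w u v : tor n d) : a = b - v + u -> inQ l x b -> inQ l x w ->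
  (forall i, nat_of_ord (u ord0 i) <= 1)%N -> (forall i, nat_of_ord (v ord0 i) <= 1)%N ->
  (rho a w <= l-1)%N.
Proof.
move=> -> /forallP hb /forallP hw hu hv.
rewrite /rho; apply/bigmax_leqP => i _.
rewrite (@cdist_shift _ _ _ (x ord0 i)).
have -> : (b - v + u) ord0 i - x ord0 i = ((b - x) ord0 i) - v ord0 i + u ord0 i.
  by rewrite !mxE addrAC (addrAC (b ord0 i)).
have -> : w ord0 i - x ord0 i = (w - x) ord0 i by rewrite !mxE.
exact: cd_small.
Qed.

Lemma small_ej n d j i : (nat_of_ord ((ej n j : tor n d) ord0 i) <= 1)%N.
Proof. rewrite mxE; case: eqP => _ //; rewrite /inord val_insubd; by case: ifP. Qed.

Lemma small0 n d i : (nat_of_ord ((0 : tor n d)%R ord0 i) <= 1)%N.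
Proof. by rewrite mxE. Qed.

Lemma loc (R : realType) n d m l (phi psi chi : field R n d m) (x w y : tor n d)
  (Hdist : forall x y, phi x != 0 -> psi y != 0 -> (l - 1 < rho x y)%N)
  (hchi : forall z, ~~ inQ l x z -> chi z = 0) (hw : inQ l x w) (hpw : psi w != 0) :
  grad chi y != 0 -> grad phi y = 0.
Proof.
move=> hg.
have [v [hv hb]] : exists v : tor n d, (forall i, nat_of_ord (v ord0 i) <= 1)%N /\ inQ l x (y + v).
  case hy: (inQ l x y).
    by exists 0; split; [exact: small0 | rewrite addr0].
  case: (pickP (fun j => inQ l x (y + ej n j))) => [j hj | none].
    by exists (ej n j); split => //; exact: small_ej.
  move/eqP: hg; case; apply/matrixP => r j; rewrite !mxE.
  by rewrite (hchi y) ?hy // (hchi (y + ej n j)) ?none // !mxE subrr.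
have key : forall u : tor n d, (forall i, nat_of_ord (u ord0 i) <= 1)%N -> phi (y + u) = 0.
  move=> u hu; apply/eqP; apply: contraT => hne.
  have := Hdist _ _ hne hpw; rewrite ltnNge.
  by rewrite (@rho_near _ _ l x (y+u) (y+v) w u v) // addrK.
have k0 := key 0 (@small0 n d); rewrite addr0 in k0.
apply/matrixP => r j; rewrite !mxE (key (ej n j) (@small_ej n d j)) k0 !mxE subrr.
by rewrite ?mxE.
Qed.

Lemma P_zero (R : realType) n d m l (P : field R n d m) (x : tor n d) (j0 : 'I_d) (hn : (1 < n)%N) :
  (forall z, ~~ inQ l x z -> P z = 0) -> (forall y, grad P y = 0) -> forall y, P y = 0.
Proof.
move=> hP hg.
set e := ej n j0.
have step w : P (w + e) = P w.
  apply/rowP => r; have /matrixP/(_ r j0) := hg w.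
  by rewrite !mxE => /eqP; rewrite subr_eq0 => /eqP.
have iter t y : P y = P (y - e *+ t).
  elim: t => [|t IH]; first by rewrite mulr0n subr0.
  by rewrite IH -(step (y - e *+ t.+1)) mulrSr opprD addrA subrK.
move=> y; rewrite (iter (nat_of_ord ((y - x) ord0 j0)) y); apply: hP.
apply/forallP => /(_ j0).
have -> : (y - e *+ nat_of_ord ((y - x) ord0 j0) - x) ord0 j0 = 0.
  rewrite !mxE mulmxnE /e !mxE eqxx Zp_mulrn.
  have h1 : nat_of_ord (inord 1 : 'I_n.-1.+1) = 1%N by rewrite inordK // prednK // ltnW.
  rewrite h1 mul1n valZpK.
  move: (y ord0 j0) (x ord0 j0) => a b.
  by rewrite opprB addrA (addrC a) addrK subrr.
by [].
Qed.

Lemma ipC (R : realType) n d m (f g : field R n d m) : ip f g = ip g f.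
Proof. by rewrite /ip; apply: eq_bigr => y _; apply: eq_bigr => r _; rewrite mulrC. Qed.

Lemma ipB (R : realType) n d m (f g h : field R n d m) :
  ip (fun y => f y - g y) h = ip f h - ip g h.
Proof.
rewrite /ip -sumrB; apply: eq_bigr => y _; rewrite -sumrB; apply: eq_bigr => r _.
by rewrite !mxE mulrBl.
Qed.

Lemma ip_disj (R : realType) n d m l (phi psi : field R n d m)
  (Hdist : forall x y, phi x != 0 -> psi y != 0 -> (l - 1 < rho x y)%N) : ip phi psi = 0.
Proof.
rewrite /ip big1 // => y _.
case: (eqVneq (phi y) 0) => [->|h1].
  by rewrite big1 // => r _; rewrite mxE mul0r.
case: (eqVneq (psi y) 0) => [->|h2].
  by rewrite big1 // => r _; rewrite mxE mulr0.
by have := Hdist _ _ h1 h2; rewrite rho_refl.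
Qed.

Lemma part1 (R : realType) n d m l
  (A : 'M[R]_(m, d) -> 'M[R]_(m, d))
  (Alin : forall (a : R) (F G : 'M[R]_(m, d)), A (a *: F + G) = a *: A F + A G)
  (Apos : forall F : 'M[R]_(m, d), F != 0 -> 0 < frob (A F) F)
  (Pi : tor n d -> field R n d m -> field R n d m)
  (HPi : forall x phi, inX phi -> is_orth_proj A (inHQ l x) phi (Pi x phi))
  (hn : (1 < n)%N) (hd : (0 < d)%N)
  (phi psi : field R n d m) (Hphi : inX phi)
  (Hdist : forall x y, phi x != 0 -> psi y != 0 -> (l - 1 < rho x y)%N) :
  ip (Top l Pi phi) psi = 0.
Proof.
have A0 : A 0 = 0.
  have h := Alin 1 0 0; rewrite !scale1r addr0 in h.
  by apply: (addrI (A 0)); rewrite addr0 -h.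
have AN F : A (- F) = - A F.
  by have := Alin (-1) F 0; rewrite !addr0 A0 addr0 !scaleN1r.
have frob0 F : frob F 0 = 0.
  by rewrite /frob big1 // => r _; rewrite big1 // => j _; rewrite mxE mulr0.
have frobN F G : frob (- F) G = - frob F G.
  rewrite /frob -sumrN; apply: eq_bigr => r _; rewrite -sumrN; apply: eq_bigr => j _.
  by rewrite mxE mulNr.
have frob_ge0 F : 0 <= frob (A F) F.
  case: (eqVneq F 0) => [->|/Apos/ltW //]; by rewrite frob0.
have gradB (f g : field R n d m) y : grad (fun z => f z - g z) y = grad f y - grad g y.
  apply/matrixP => r j; rewrite !mxE; lra.
have key x : ip (Pi x phi) psi = 0.
  have [HS Horth] := HPi x phi Hphi.
  set P := Pi x phi in HS Horth *.
  have hPz := HS.2.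
  case: (pickP (fun w => inQ l x w && (psi w != 0))) => [w /andP[hw hpw] | none].
    have Pz : forall y, P y = 0.
      apply: (@P_zero R n d m l P x (Ordinal hd) hn hPz).
      have H := Horth P HS.
      have E y : frob (A (grad (fun z => phi z - P z) y)) (grad P y)
                 = - frob (A (grad P y)) (grad P y).
        case: (eqVneq (grad P y) 0) => [->|hne]; first by rewrite !frob0 oppr0.
        by rewrite gradB (@loc _ _ _ _ _ _ _ _ _ _ _ Hdist hPz hw hpw hne) sub0r AN frobN.
      have H2 : \sum_y frob (A (grad P y)) (grad P y) = 0.
        move: H; rewrite /ipA (eq_bigr _ (fun y _ => E y)) sumrN => /eqP.
        by rewrite oppr_eq0 => /eqP.
      move=> y; have := psumr_eq0P (fun y _ => frob_ge0 (grad P y)) H2 (i := y) isT.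
      move=> h0; apply/eqP; apply/negP => /negP hne.
      by have := Apos _ hne; rewrite h0 ltxx.
    by rewrite /ip big1 // => y _; rewrite Pz big1 // => r _; rewrite mxE mul0r.
  rewrite /ip big1 // => y _.
  case hy: (inQ l x y).
    have : psi y = 0 by have := none y; rewrite hy /= => /negbFE/eqP.
    by move=> ->; rewrite big1 // => r _; rewrite mxE mulr0.
  by rewrite hPz ?hy // big1 // => r _; rewrite mxE mul0r.
transitivity ((l%:R ^- d : R) * \sum_x ip (Pi x phi) psi); last first.
  by rewrite big1 ?mulr0 // => x _; exact: key.
rewrite /ip /Top.
under eq_bigr do under eq_bigr do rewrite !mxE summxE mulr_sumr mulr_suml.
rewrite mulr_sumr.
under [in RHS]eq_bigr do rewrite mulr_sumr.
under [in RHS]eq_bigr do under eq_bigr do rewrite mulr_sumr.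
rewrite [RHS]exchange_big; apply: eq_bigr => y _.
rewrite [RHS]exchange_big; apply: eq_bigr => r _.
apply: eq_bigr => x _; by rewrite mulrA.
Qed.

Theorem lemma3p6 (R : realType) (L N d m l : nat)
  (HLodd : odd L) (HL : (3 <= L)%N) (HN : (1 <= N)%N) (Hd : (2 <= d)%N)
  (Hm : (1 <= m)%N) (Hl : (3 <= l)%N) (HlN : (l - 1 < L ^ N)%N)
  (A : 'M[R]_(m, d) -> 'M[R]_(m, d))
  (Alin : forall (a : R) (F G : 'M[R]_(m, d)), A (a *: F + G) = a *: A F + A G)
  (Asym : forall F G : 'M[R]_(m, d), frob (A F) G = frob F (A G))
  (Apos : forall F : 'M[R]_(m, d), F != 0 -> 0 < frob (A F) F)
  (Pi : tor (L ^ N) d -> field R (L ^ N) d m -> field R (L ^ N) d m)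
  (HPi : forall x phi, inX phi -> is_orth_proj A (inHQ l x) phi (Pi x phi))
  (T' : field R (L ^ N) d m -> field R (L ^ N) d m)
  (HT' : forall phi, inX phi ->
     inX (T' phi) /\ forall psi, inX psi -> ip (T' phi) psi = ip phi (Top l Pi psi))
  (phi psi : field R (L ^ N) d m) (Hphi : inX phi) (Hpsi : inX psi)
  (Hdist : forall x y, phi x != 0 -> psi y != 0 -> (l - 1 < rho x y)%N) :
  [/\ ip (Top l Pi phi) psi = 0,
      ip (T' phi) psi = 0,
      ip (fun y => phi y - Top l Pi phi y) psi = 0
    & ip (fun y => phi y - T' phi y) psi = 0].

Proof.
have hn : (1 < L ^ N)%N.
  apply: leq_trans (_ : L <= L ^ N)%N; first by apply: leq_trans HL.
  by rewrite -{1}(expn1 L) leq_exp2l // (leq_trans _ HL).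
have hd : (0 < d)%N by apply: leq_trans Hd.
have H1 := @part1 R _ d m l A Alin Apos Pi HPi hn hd phi psi Hphi Hdist.
have Hdist' : forall x y, psi x != 0 -> phi y != 0 -> (l - 1 < rho x y)%N.
  by move=> x y hx hy; rewrite rho_sym; exact: Hdist.
have H2' := @part1 R _ d m l A Alin Apos Pi HPi hn hd psi phi Hpsi Hdist'.
have H2 : ip (T' phi) psi = 0 by rewrite (HT' phi Hphi).2 // ipC.
have H0 := @ip_disj R _ d m l phi psi Hdist.
by split => //; rewrite ipB ?H1 ?H2 H0 subr0.
Qed.
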